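(* Let $n\ge 1$. The subuniverses of $\mathbf{P\L}_n$ are exactly the sets $$P_k=\{0,\tfrac{\ell}{n},\tfrac{2\ell}{n},\dots,\tfrac{(k-1)\ell}{n},1\}=\{\tfrac{i}{k}: 0\le i\le k\},$$ one for each factorization $n=k\cdot\ell$ with $k,\ell$ positive integers. Each such subalgebra is isomorphic to $\mathbf{P\L}_k$. Consequently the lattice of subalgebras of $\mathbf{P\L}_n$ is isomorphic to the lattice of positive divisors of $n$.
   Context: For $n\ge 1$, the $(n+1)$-element positive MV-chain is the algebra $\mathbf{P\L}_n=\langle\{0,\tfrac1n,\dots,\tfrac{n-1}{n},1\},\wedge,\vee,\odot,\oplus,0,1\rangle$. Here $\wedge=\min$, $\vee=\max$, $x\odot y=\max\{0,x+y-1\}$ and $x\oplus y=\min\{1,x+y\}$. It is the negation-free reduct of the finite MV-chain $\text{\L}_n$. *)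

(* Defs.v *)
From mathcomp Require Import all_boot.
Set Implicit Arguments. Unset Strict Implicit. Unset Printing Implicit Defensive.

(* The positive MV-chain PL_n, encoded on 'I_n.+1: the ordinal i stands for i/n.
   Operations (scaled by n):
     x /\ y = min, x \/ y = max,
     x (.) y = max(0, x + y - n)  (truncated subtraction),
     x (+) y = min(n, x + y),  0 = ord0,  1 = ord_max. *)
Section PL.
Variable n : nat.
Definition PL_meet (x y : 'I_n.+1) : 'I_n.+1 := inord (minn x y).
Definition PL_join (x y : 'I_n.+1) : 'I_n.+1 := inord (maxn x y).
Definition PL_odot (x y : 'I_n.+1) : 'I_n.+1 := inord ((x + y) - n).
Definition PL_oplus (x y : 'I_n.+1) : 'I_n.+1 := inord (minn n (x + y)).
Definition PL_zero : 'I_n.+1 := ord0.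
Definition PL_one : 'I_n.+1 := ord_max.

Definition PL_subuniverse (S : {set 'I_n.+1}) : Prop :=
  [/\ PL_zero \in S, PL_one \in S &
   forall x y, x \in S -> y \in S ->
     [/\ PL_meet x y \in S, PL_join x y \in S,
         PL_odot x y \in S & PL_oplus x y \in S]].

(* P_k = {0, l/n, 2l/n, ..., 1} with n = k * l, i.e. elements i/n with l | i *)
Definition Pk (k : nat) : {set 'I_n.+1} := [set i : 'I_n.+1 | (n %/ k) %| i].
End PL.

Definition PL_hom (m n : nat) (f : 'I_m.+1 -> 'I_n.+1) : Prop :=
  [/\ f (PL_zero m) = PL_zero n, f (PL_one m) = PL_one n &
   forall x y,
     [/\ f (PL_meet x y) = PL_meet (f x) (f y),
         f (PL_join x y) = PL_join (f x) (f y),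
         f (PL_odot x y) = PL_odot (f x) (f y) &
         f (PL_oplus x y) = PL_oplus (f x) (f y)]].

Definition PL_iso_onto (m n : nat) (f : 'I_m.+1 -> 'I_n.+1) (S : {set 'I_n.+1}) : Prop :=
  [/\ PL_hom f, injective f & forall y, y \in S <-> exists x, f x = y].

(* Main.v *)
Require Import Defs.
From mathcomp Require Import all_boot zify.

Lemma valinord n a : a <= n -> nat_of_ord (inord a : 'I_n.+1) = a.
Proof. by move=> h; rewrite inordK // ltnS. Qed.

Section Clo.
Variables (n : nat) (S : {set 'I_n.+1}).
Hypothesis HS : PL_subuniverse S.
Let mem a := (inord a : 'I_n.+1) \in S.

Lemma mem0 : mem 0.
Proof. case: HS => h _ _; rewrite /mem; suff -> : (inord 0 : 'I_n.+1) = PL_zero n by [].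
by apply: val_inj => /=; rewrite inordK. Qed.

Lemma memn : mem n.
Proof. case: HS => _ h _; rewrite /mem; suff -> : (inord n : 'I_n.+1) = PL_one n by [].
by apply: val_inj => /=; rewrite inordK. Qed.

Lemma addc a b : mem a -> mem b -> a + b <= n -> mem (a + b).
Proof.
move=> ha hb hab; case: HS => _ _ /(_ _ _ ha hb) [_ _ _].
rewrite /PL_oplus !valinord ?(leq_trans _ hab) ?leq_addr ?leq_addl //.
by rewrite (minn_idPr hab).
Qed.

Lemma subc a b : mem a -> mem b -> a <= n -> b <= n -> mem (a + b - n).
Proof.
move=> ha hb an bn; case: HS => _ _ /(_ _ _ ha hb) [_ _ + _].
by rewrite /PL_odot !valinord.
Qed.

Lemma memmul l j : mem l -> j * l <= n -> mem (j * l).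
Proof.
move=> hl; elim: j => [|j IH] h; first by rewrite mul0n; apply: mem0.
have h' : j * l <= n by apply: leq_trans h; rewrite mulSn leq_addl.
rewrite mulSn; apply: addc => //; try exact: IH; by rewrite -mulSn.
Qed.

Lemma sub_forward (hn : 0 < n) : exists l, [/\ 0 < l, l %| n &
   forall a, a <= n -> mem a = (l %| a)].
Proof.
have ex : exists j, (0 < j) && (j <= n) && mem j.
  by exists n; rewrite hn leqnn memn.
set l := ex_minn ex.
have [/andP [/andP [l0 ln] ml] lmin] : (0 < l) && (l <= n) && mem l /\
  forall j, (0 < j) && (j <= n) && mem j -> l <= j.
  by rewrite /l; case: ex_minnP.
have ldn : l %| n.
  have nE := divn_eq n l.
  have rl : n %% l < l by rewrite ltn_mod.
  have qn : n %/ l * l <= n by rewrite leq_divM.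
  rewrite /dvdn; apply/eqP.
  case r0: (n %% l) => [//|r].
  have h := subc _ _ (memmul _ _ ml qn) ml qn ln.
  have : l <= (n %/ l * l + l - n).
    by apply: lmin; rewrite h; lia.
  lia.
exists l; split => //.
move=> a an; apply/idP/idP => [ma|].
  have aE := divn_eq a l.
  have rl : a %% l < l by rewrite ltn_mod.
  set q := n %/ l.
  have nE : n = q * l by rewrite divnK.
  have qa : a %/ l <= q.
    by rewrite /q leq_div2r.
  have m2 : mem ((q - a %/ l) * l).
    by apply: memmul => //; rewrite mulnBl -nE leq_subr.
  have m2n : (q - a %/ l) * l <= n by rewrite mulnBl -nE leq_subr.
  have h := subc _ _ ma m2 an m2n.
  have e : a + (q - a %/ l) * l - n = a %% l.
    rewrite mulnBl -nE {1}aE.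
    have : a %/ l * l <= n by rewrite nE leq_mul2r qa orbT.
    lia.
  rewrite e in h.
  rewrite /dvdn; apply/eqP.
  case r0: (a %% l) => [//|r].
  have : l <= a %% l by apply: lmin; rewrite h; lia.
  lia.
move=> /dvdnP [j ja]; move: an; rewrite ja => an; exact: memmul.
Qed.
End Clo.

Lemma divdiv {n k} : 0 < n -> 0 < k -> k %| n -> [/\ 0 < n %/ k, n = k * (n %/ k) & n %/ (n %/ k) = k].
Proof.
move=> hn hk hd; have nE : n = k * (n %/ k) by rewrite mulnC divnK.
have l0 : 0 < n %/ k by rewrite divn_gt0 // dvdn_leq.
split => //; by rewrite {1}nE mulnK.
Qed.

Lemma Pk_sub n k : 0 < n -> 0 < k -> k %| n -> PL_subuniverse (Pk n k).
Proof.
move=> hn hk hd; have [l0 nE _] := divdiv hn hk hd.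
have hP : forall i : 'I_n.+1, (i \in Pk n k) = (n %/ k %| i) by move=> i; rewrite inE.
have ln : n %/ k %| n by rewrite {2}nE dvdn_mull.
split.
- by rewrite hP /= dvdn0.
- by rewrite hP /=.
move=> x y; rewrite !hP => hx hy.
move: (n %/ k) l0 nE ln hx hy => l l0 nE ln hx hy.
have xn := ltn_ord x; have yn := ltn_ord y.
rewrite /PL_meet /PL_join /PL_odot /PL_oplus !valinord;
  try (rewrite ?geq_minl ?geq_minr ?leq_subLR; lia).
split.
- by rewrite /minn; case: ifP.
- by rewrite /maxn; case: ifP.
- case: (leqP n (x + y)) => h; first by rewrite dvdn_sub // dvdn_add.
  by have -> : x + y - n = 0 by lia.
- rewrite /minn; case: ifP => _ //.
  by rewrite dvdn_add.
Qed.

Lemma iso_part n k : 0 < n -> 0 < k -> k %| n ->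
  exists f : 'I_k.+1 -> 'I_n.+1, PL_iso_onto f (Pk n k).
Proof.
move=> hn hk hd; have [l0 nE _] := divdiv hn hk hd.
have hP : forall i : 'I_n.+1, (i \in Pk n k) = (n %/ k %| i) by move=> i; rewrite inE.
move: (n %/ k) l0 nE hP => l l0 nE hP.
have bnd : forall x : 'I_k.+1, x * l <= n.
  by move=> x; have := ltn_ord x; rewrite nE; nia.
exists (fun x => inord (x * l)); split.
- split.
  + by apply: val_inj; rewrite /= valinord.
  + by apply: val_inj; rewrite /= !valinord // nE.
  move=> x y; have xk := ltn_ord x; have yk := ltn_ord y.
  have xl := bnd x; have yl := bnd y.
  split; apply: val_inj; rewrite /PL_meet /PL_join /PL_odot /PL_oplus /=
     !valinord ?geq_minl ?geq_minr ?leq_subLR //; try nia.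
- move=> x y /(f_equal val) /=; rewrite !valinord ?bnd // => /eqP.
  by rewrite eqn_mul2r eqn0Ngt l0 /= => /eqP /val_inj.
move=> y; rewrite hP; split.
  move=> /dvdnP [j jE]; have jk : j <= k.
    have := ltn_ord y; rewrite jE nE; nia.
  by exists (inord j); apply: val_inj; rewrite /= !valinord ?jE // -jE -ltnS.
by move=> [x <-]; rewrite valinord ?bnd // dvdn_mull.
Qed.

Lemma sub_part n k k' : 0 < n -> 0 < k -> 0 < k' -> k %| n -> k' %| n ->
  (Pk n k \subset Pk n k') = (k %| k').
Proof.
move=> hn hk hk' hd hd'.
have [l0 nE _] := divdiv hn hk hd.
have [l0' nE' _] := divdiv hn hk' hd'.
have e : (n %/ k' %| n %/ k) = (k %| k').
  have ee : k * (n %/ k) = k' * (n %/ k') by rewrite -nE -nE'.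
  by rewrite -(dvdn_pmul2l hk) ee (dvdn_pmul2r l0').
rewrite -e; apply/subsetP/idP => [h | h i].
  have ln : n %/ k <= n by rewrite {2}nE leq_pmull.
  have := h (inord (n %/ k)); rewrite !inE valinord //; apply.
  exact: dvdnn.
by rewrite !inE => /(dvdn_trans h).
Qed.

Theorem proposition3p2 (n : nat) (hn : 0 < n) :
  [/\ (* the subuniverses are exactly the P_k, k * l = n *)
      (forall S : {set 'I_n.+1},
         PL_subuniverse S <-> exists k, [/\ 0 < k, k %| n & S = Pk n k]),
      (* each P_k is (the universe of) a subalgebra isomorphic to PL_k *)
      (forall k, 0 < k -> k %| n ->
         exists f : 'I_k.+1 -> 'I_n.+1, PL_iso_onto f (Pk n k)) &
      (* k |-> P_k is an order isomorphism (divisibility vs inclusion),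
         hence a lattice isomorphism from divisors of n to subalgebras *)
      (forall k k', 0 < k -> 0 < k' -> k %| n -> k' %| n ->
         (Pk n k \subset Pk n k') = (k %| k'))].
Proof.
split.
- move=> S; split => [HS | [k [hk hd ->]]]; last exact: Pk_sub.
  have [l [l0 ld hm]] := sub_forward _ _ HS hn.
  have [k0 nE kE] := divdiv hn l0 ld.
  exists (n %/ l); split => //; first by rewrite {2}nE dvdn_mull.
  apply/setP => i; rewrite inE kE -hm -1?ltnS //.
  by rewrite inord_val.
- by move=> k hk hd; apply: iso_part.
- by move=> k k' hk hk' hd hd'; apply: sub_part.
Qed.
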